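(* For every graph $G$, $\pi_{T_w}(G)\le \min\{\pi(G),\pi'(G)\}+1$.
   Context: Graphs are finite and simple. A sequence is nonrepetitive if no block of consecutive terms has the form $r_1\dots r_nr_1\dots r_n$ with $n\ge1$. A vertex-colouring of $G$ is nonrepetitive if for every path $v_1,\dots,v_k$ of $G$ the colour sequence of its vertices is nonrepetitive; $\pi(G)$ (Thue chromatic number) is the minimum number of colours in such a colouring. Analogously an edge-colouring is nonrepetitive if the colour sequence of the edges of every path is nonrepetitive, and $\pi'(G)$ (Thue chromatic index) is the minimum number of colours in such a colouring. A weak total Thue colouring of $G$ is a colouring of $V(G)\cup E(G)$ such that for every path $v_1,e_1,v_2,\dots,e_{k-1},v_k$ in $G$ the sequence of colours of $v_1,e_1,v_2,e_2,\dots,v_k$ is nonrepetitive; $\pi_{T_w}(G)$ (weak total Thue chromatic number) is the minimum number of colours in such a colouring. *)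

(* Defs.v *)
From Stdlib Require Import ClassicalEpsilon.
From mathcomp Require Import all_boot zify.
Set Implicit Arguments. Unset Strict Implicit. Unset Printing Implicit Defensive.

(* A graph is a finite type T of vertices with a symmetric irreflexive
   adjacency relation e.  A path v_1,...,v_k (k >= 1) is represented by its
   head x = v_1 and tail p = [v_2;...;v_k], with [path e x p] (consecutive
   vertices adjacent) and [uniq (x :: p)] (vertices distinct). *)

Definition nonrep (A : Type) (s : seq A) : Prop :=
  ~ exists a r c, 0 < size r /\ s = a ++ r ++ r ++ c.

Definition nr_vcol (T : finType) (e : rel T) (k : nat) (c : T -> nat) : Prop :=
  (forall x, c x < k) /\
  (forall x p, path e x p -> uniq (x :: p) -> nonrep (map c (x :: p))).

(* Edge colouring: c x y is the colour of the edge xy (only meaningful when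
   e x y; it must not depend on the orientation). The edge-colour sequence of
   the path x :: p is pairmap c x p. *)
Definition nr_ecol (T : finType) (e : rel T) (k : nat) (c : T -> T -> nat) : Prop :=
  (forall x y, e x y -> c x y < k) /\
  (forall x y, e x y -> c x y = c y x) /\
  (forall x p, path e x p -> uniq (x :: p) -> nonrep (pairmap c x p)).

Fixpoint tseq (T : Type) (cv : T -> nat) (ce : T -> T -> nat) (x : T) (p : seq T)
  : seq nat :=
  match p with
  | [::] => [:: cv x]
  | y :: p' => cv x :: ce x y :: tseq cv ce y p'
  end.

Definition nr_tcol (T : finType) (e : rel T) (k : nat)
    (cv : T -> nat) (ce : T -> T -> nat) : Prop :=
  (forall x, cv x < k) /\
  (forall x y, e x y -> ce x y < k) /\
  (forall x y, e x y -> ce x y = ce y x) /\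
  (forall x p, path e x p -> uniq (x :: p) -> nonrep (tseq cv ce x p)).

Definition classb (P : Prop) : bool :=
  if excluded_middle_informative P then true else false.

Lemma classbP (P : Prop) : classb P <-> P.
Proof. by rewrite /classb; case: excluded_middle_informative. Qed.

Definition has_vcol (T : finType) (e : rel T) (k : nat) : bool :=
  classb (exists c, nr_vcol e k c).
Definition has_ecol (T : finType) (e : rel T) (k : nat) : bool :=
  classb (exists c, nr_ecol e k c).
Definition has_tcol (T : finType) (e : rel T) (k : nat) : bool :=
  classb (exists cv ce, nr_tcol e k cv ce).

Section Existence.
Variable T : finType.

Definition code (S : {set T}) : nat := enum_rank S.

Lemma code_inj : injective code.
Proof. by move=> S S' /val_inj/enum_rank_inj. Qed.

Lemma code_lt S : code S < #|{set T}|.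
Proof. exact: ltn_ord. Qed.

Lemma uniq_nonrep (A : eqType) (s : seq A) : uniq s -> nonrep s.
Proof.
move=> u [a [[|x r] [c [//= _ hs]]]].
have := count_uniq_mem x u; rewrite hs !count_cat /= !count_cat /= eqxx.
case: (x \in _) => /=; lia.
Qed.

Lemma tseq_sub (cv : T -> nat) (ce : T -> T -> nat)
  (hv : forall u, exists S : {set T}, cv u = code S /\ S \subset [set u])
  (he : forall u v, exists S : {set T}, ce u v = code S /\ S \subset [set u; v])
  x p z : z \in tseq cv ce x p ->
  exists S : {set T}, z = code S /\ forall w, w \in S -> w \in x :: p.
Proof.
have sub2 (S : {set T}) u v (q : seq T) : S \subset [set u; v] ->
    u \in q -> v \in q -> forall w, w \in S -> w \in q.
  by move=> /subsetP sS hu hv' w /sS; rewrite !inE => /orP[]/eqP->.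
have sub1 (S : {set T}) u (q : seq T) : S \subset [set u] ->
    u \in q -> forall w, w \in S -> w \in q.
  by move=> /subsetP sS hu w /sS; rewrite !inE => /eqP->.
elim: p x => [|y p IH] x /=.
  rewrite inE => /eqP ->; have [S [-> sS]] := hv x.
  by exists S; split=> //; apply: sub1 sS _; rewrite mem_head.
rewrite !inE => /orP[/eqP ->|/orP[/eqP ->|/IH [S [-> hS]]]].
- have [S [-> sS]] := hv x.
  by exists S; split=> //; apply: sub1 sS _; rewrite mem_head.
- have [S [-> sS]] := he x y.
  by exists S; split=> //; apply: sub2 sS _ _; rewrite !inE eqxx ?orbT.
- by exists S; split=> // w /hS; rewrite !inE => ->; rewrite orbT.
Qed.

Definition tcv (u : T) : nat := code [set u].
Definition tce (u v : T) : nat := code [set u; v].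

Lemma tce_sym u v : tce u v = tce v u.
Proof. by rewrite /tce setUC. Qed.

Lemma tseq_uniq x p : uniq (x :: p) -> uniq (tseq tcv tce x p).
Proof.
have hv u : exists S : {set T}, tcv u = code S /\ S \subset [set u].
  by exists [set u].
have he u v : exists S : {set T}, tce u v = code S /\ S \subset [set u; v].
  by exists [set u; v].
elim: p x => [|y p IH] x //= /andP[xn u].
rewrite IH // andbT inE negb_or.
have xy : x != y by apply: contraNneq xn => ->; rewrite inE eqxx.
have notin (S : {set T}) : (forall w, w \in S -> w \in y :: p) -> x \notin S.
  by move=> hS; apply: contra xn => /hS.
apply/andP; split; [apply/andP; split|].
- apply/negP => /eqP/code_inj/setP/(_ y); rewrite !inE eqxx orbT.
  by rewrite eq_sym (negbTE xy).
- by apply/negP => /(tseq_sub hv he) [S [/code_inj eS /notin]];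
     rewrite -eS !inE eqxx.
- by apply/negP => /(tseq_sub hv he) [S [/code_inj eS /notin]];
     rewrite -eS !inE eqxx.
Qed.

Lemma pairmap_sub (f : T -> T -> nat) x p z : z \in pairmap f x p ->
  exists u v, z = f u v /\ u \in x :: p /\ v \in x :: p.
Proof.
elim: p x => [|y p IH] x //=; rewrite inE => /orP[/eqP ->|/IH [u [v [-> [hu hv]]]]].
  by exists x, y; rewrite !inE !eqxx ?orbT.
by exists u, v; split=> //; split; rewrite inE ?hu ?hv orbT.
Qed.

Lemma pairmap_uniq x p : uniq (x :: p) -> uniq (pairmap tce x p).
Proof.
elim: p x => [|y p IH] x //= /andP[xn u]; rewrite IH // andbT.
apply/negP => /pairmap_sub [a [b [/code_inj /setP /(_ x)]]].
rewrite !inE eqxx /= => /esym /orP[] /eqP <- [ha hb].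
- by move: xn ha; rewrite !inE => /negbTE ->.
- by move: xn hb; rewrite !inE => /negbTE ->.
Qed.

Variable e : rel T.

Lemma ex_tcol : exists k, has_tcol e k.
Proof.
exists #|{set T}|; apply/classbP; exists tcv, tce.
split; [by move=> x; apply: code_lt|split; [by move=> x y _; apply: code_lt|]].
split; [by move=> x y _; apply: tce_sym|].
by move=> x p _ u; apply/uniq_nonrep/tseq_uniq.
Qed.

Lemma ex_ecol : exists k, has_ecol e k.
Proof.
exists #|{set T}|; apply/classbP; exists tce.
split; [by move=> x y _; apply: code_lt|split; [by move=> x y _; apply: tce_sym|]].
by move=> x p _ u; apply/uniq_nonrep/pairmap_uniq.
Qed.

Lemma ex_vcol : exists k, has_vcol e k.
Proof.
exists #|{set T}|; apply/classbP; exists tcv.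
split; [by move=> x; apply: code_lt|].
move=> x p _ u; apply/uniq_nonrep; rewrite map_inj_uniq //.
by move=> a b /code_inj /set1_inj.
Qed.
End Existence.

Definition thue_number (T : finType) (e : rel T) : nat := ex_minn (ex_vcol e).
Definition thue_index (T : finType) (e : rel T) : nat := ex_minn (ex_ecol e).
Definition weak_total_thue_number (T : finType) (e : rel T) : nat :=
  ex_minn (ex_tcol e).

(* Main.v *)
Require Import Defs.
From mathcomp Require Import all_boot.
From mathcomp Require Import zify.

Lemma nlt (n1 n2 : nat) : n2 <= n1 -> (n1 < n2) = false.
Proof. by move=> h; apply/negbTE; rewrite -leqNgt. Qed.

Definition rep (s : seq nat) i m :=
  0 < m /\ i + m.*2 <= size s /\
  forall j, j < m -> nth 0 s (i + j) = nth 0 s (i + m + j).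

Lemma rep_of (s : seq nat) : (exists a r c, 0 < size r /\ s = a ++ r ++ r ++ c) ->
  exists i m, rep s i m.
Proof.
case=> a [r [c [hr ->]]]; exists (size a), (size r); split=> //.
split; first by rewrite !size_cat; lia.
move=> j hj; rewrite nth_cat nlt; last by lia.
rewrite addKn nth_cat hj.
rewrite -addnA nth_cat nlt; last by lia.
rewrite addKn nth_cat nlt; last by lia.
by rewrite addKn nth_cat hj.
Qed.

Lemma of_rep (s : seq nat) i' m' : rep s i' m' -> ~ nonrep s.
Proof.
move=> hr' hn; apply: hn.
case: hr' => [m0 [hs hj]].
exists (take i' s), (take m' (drop i' s)), (drop (i' + m'.*2) s).
split; first by rewrite size_take size_drop; case: ifP; lia.
have E : take m' (drop i' s) = take m' (drop (i' + m') s).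
  have e1 : size (take m' (drop i' s)) = m' by rewrite size_takel // size_drop; lia.
  have e2 : size (take m' (drop (i' + m') s)) = m' by rewrite size_takel // size_drop; lia.
  apply: (@eq_from_nth _ 0); first by rewrite e1 e2.
  move=> j; rewrite e1 => jm.
  by rewrite !nth_take // !nth_drop hj.
rewrite -{1}(cat_take_drop i' s); congr (_ ++ _).
rewrite -{1}(cat_take_drop m' (drop i' s)) drop_drop; congr (_ ++ _).
have -> : m' + i' = i' + m' by lia.
rewrite E -{1}(cat_take_drop m' (drop (i' + m') s)) drop_drop; congr (_ ++ _).
by congr (drop _ _); lia.
Qed.

Lemma interleave (k : nat) (b : bool) (t s : seq nat) :
  (forall a, a < size s -> nth 0 s a < k) ->
  (forall a, ~~ b + a.*2 < size t -> nth 0 t (~~ b + a.*2) = nth 0 s a /\ a < size s) ->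
  (forall a, b + a.*2 < size t -> nth 0 t (b + a.*2) = k) ->
  forall i m, rep t i m -> exists i' m', rep s i' m'.
Proof.
move=> hk hg hb i m [m0 [hsz hj]].
have dec j : j < size t -> (nth 0 t j = k /\ odd j = b) \/
     (nth 0 t j < k /\ odd j = ~~ b).
  move=> hjt; have ej : j = odd j + (j./2).*2 by lia.
  case: (boolP (odd j == b)) => /eqP ob.
    left; split=> //; rewrite ej ob hb //; rewrite -ob; lia.
  right; have ob' : odd j = ~~ b by move: ob; destruct (odd j); destruct b.
  have hlt : ~~ b + (j./2).*2 < size t by rewrite -ob'; lia.
  have [e1 e2] := hg _ hlt.
  by split=> //; rewrite ej ob' e1 hk.
case om: (odd m).
  have := hj 0 m0; rewrite !addn0.
  have h1 : i < size t by lia.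
  have h2 : i + m < size t by lia.
  have oim : odd (i + m) = ~~ odd i by rewrite oddD om; case: (odd i).
  case: (dec _ h1) => [[-> o1]|[l1 o1]]; case: (dec _ h2) => [[-> o2]|[l2 o2]];
    try lia; move: oim; rewrite o1 o2; by destruct b.
set l := m./2.
have em : m = l.*2 by rewrite /l; lia.
set d := (odd i == b) : nat.
have hodd : odd (i + d) = ~~ b.
  by rewrite /d oddD; destruct (odd i); destruct b.
set i' := (i + d)./2.
have ei : i + d = ~~ b + i'.*2 by have := odd_double_half (i + d); rewrite hodd /i'; lia.
have d1 : d <= 1 by rewrite /d; case: (_ == _).
have l0 : 0 < l by lia.
exists i', l; split=> //; split.
  have hp : ~~ b + (i' + l.*2 - 1).*2 < size t by lia.
  have [_ h] := hg _ hp; lia.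
move=> jj hjj.
have hP : ~~ b + (i' + jj).*2 < size t by lia.
have hQ : ~~ b + (i' + l + jj).*2 < size t by lia.
have [<- _] := hg _ hP; have [<- _] := hg _ hQ.
have := hj (d + jj.*2) ltac:(lia).
have -> : i + (d + jj.*2) = ~~ b + (i' + jj).*2 by lia.
have -> : i + m + (d + jj.*2) = ~~ b + (i' + l + jj).*2 by lia.
done.
Qed.

Lemma tseq_size (T : Type) cv ce (x : T) p : size (tseq cv ce x p) = (size p).*2.+1.
Proof. by elim: p x => [|y p IH] x //=; rewrite IH doubleS. Qed.

Lemma tseq_even (T : Type) cv ce (x : T) p a : a <= size p ->
  nth 0 (tseq cv ce x p) a.*2 = cv (nth x (x :: p) a).
Proof.
elim: p x a => [|y p IH] x [|a] //= ha.
by rewrite IH // (set_nth_default y x).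
Qed.

Lemma tseq_odd (T : Type) cv ce (x : T) p a : a < size p ->
  nth 0 (tseq cv ce x p) (1 + a.*2) = ce (nth x (x :: p) a) (nth x (x :: p) a.+1).
Proof.
elim: p x a => [|y p IH] x [|a] //= ha.
rewrite -add1n IH //=; congr ce; apply: set_nth_default => /=; lia.
Qed.

Lemma vcase (T : finType) (e : rel T) k c : nr_vcol e k c ->
  nr_tcol e k.+1 c (fun _ _ => k).
Proof.
move=> [hc hp]; split; first by move=> x; have := hc x; lia.
split=> //; split=> // x p pth u.
move: (hp x p pth u) => hn.
move=> /rep_of [i [m hr]].
have := @interleave k true _ (map c (x :: p)) _ _ _ i m hr.
case.
- by move=> a; rewrite size_map => ha; rewrite (nth_map x) //.
- move=> a; rewrite tseq_size /= => ha.
  rewrite tseq_even; last by lia.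
  rewrite -[c x :: _]/(map c (x :: p)) (nth_map x) ?size_map; last by rewrite /=; lia.
  split=> //=; lia.
- move=> a; rewrite tseq_size => ha; rewrite tseq_odd //; lia.
by move=> i' [m' hr']; exact: (@of_rep _ _ _ hr' hn).
Qed.


Lemma ecase (T : finType) (e : rel T) k c : nr_ecol e k c ->
  nr_tcol e k.+1 (fun _ => k) c.
Proof.
move=> [hc [hsym hp]]; split=> //.
split; first by move=> x y exy; have := hc x y exy; lia.
split=> // x p pth u.
move: (hp x p pth u) => hn.
move=> /rep_of [i [m hr]].
have := @interleave k false _ (pairmap c x p) _ _ _ i m hr.
case.
- move=> a; rewrite size_pairmap => ha.
  rewrite (nth_pairmap x) //; apply: hc.
  by move/(pathP x): pth; apply.
- move=> a; rewrite tseq_size => ha.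
  have hap : a < size p by lia.
  rewrite tseq_odd // (nth_pairmap x) // size_pairmap.
  by split.
- move=> a; rewrite tseq_size => ha; rewrite tseq_even //; lia.
by move=> i' [m' hr']; exact: (@of_rep _ _ _ hr' hn).
Qed.

Theorem mainTheorem2 (T : finType) (e : rel T)
  (e_sym : symmetric e) (e_irr : irreflexive e) :
  weak_total_thue_number e <= minn (thue_number e) (thue_index e) + 1.
Proof.
have W k : has_tcol e k -> weak_total_thue_number e <= k.
  by move=> h; rewrite /weak_total_thue_number; case: ex_minnP => m _ /(_ k h).
rewrite addn_minl leq_min; apply/andP; split; apply: W; rewrite addn1;
  apply/classbP.
- rewrite /thue_number; case: ex_minnP => m /classbP [c hc] _.
  by exists c, (fun _ _ => m); apply: vcase.
- rewrite /thue_index; case: ex_minnP => m /classbP [c hc] _.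
  by exists (fun _ => m), c; apply: ecase.
Qed.
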